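(* Let $(X,d,\mu)$ be as in the context, let $\theta>0$ and let $S\in\mathcal{ADR}_\theta(X)$ with constants $\varkappa_1,\varkappa_2$. Then: (1) $\mu(S)=0$; (2) there is $\sigma\in(0,1]$, depending on $\theta$, $\varkappa_1$, $\varkappa_2$ (and the doubling constant of $\mu$), such that $S$ is $\sigma$-porous.
   Context: Standing setting: $(X,d)$ complete separable metric space, $\mu$ a Borel regular locally finite outer measure, $\operatorname{supp}\mu=X$, uniformly locally doubling (for every $R>0$, $\sup_{r\in(0,R]}\sup_x\mu(B_{2r}(x))/\mu(B_r(x))<\infty$). Balls are closed, $B_r(x)=\{y:d(x,y)\le r\}$. A fixed $p\in(1,\infty)$; $X$ supports a weak local $(1,p)$-Poincaré inequality (for every $R>0$ there are $C,\lambda\ge1$ with $\inf_c\frac{1}{\mu(B_r(x))}\int_{B_r(x)}|f-c|d\mu\le Cr(\frac{1}{\mu(B_{\lambda r}(x))}\int_{B_{\lambda r}(x)}(\operatorname{lip}f)^pd\mu)^{1/p}$ for Lipschitz $f$, $x\in X$, $r\in(0,R]$). $\mathcal H_{\theta,\delta}(E):=\inf\{\sum\mu(B_{r_i}(x_i))r_i^{-\theta}:E\subset\bigcup B_{r_i}(x_i),0<r_i<\delta\}$ (countable covers), $\mathcal H_\theta=\lim_{\delta\to0}\mathcal H_{\theta,\delta}$. $S\in\mathcal{ADR}_\theta(X)$: $S$ closed and $\varkappa_1\mu(B_r(x))r^{-\theta}\le\mathcal H_\theta(B_r(x)\cap S)\le\varkappa_2\mu(B_r(x))r^{-\theta}$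 for all $x\in S$, $r\in(0,1]$. Porosity: a ball $B$ is $(S,\sigma)$-porous if there is a ball $B'\subset B\setminus S$ with $r(B')\ge\sigma r(B)$; $S$ is $\sigma$-porous if $B_r(x)$ is $(S,\sigma)$-porous for all $x\in S$ and all $r\in(0,1]$. *)

(* Defs.v *)
From HB Require Import structures.
From mathcomp Require Import all_boot all_order all_algebra.
From mathcomp Require Import all_classical all_reals all_analysis.
Set Implicit Arguments. Unset Strict Implicit. Unset Printing Implicit Defensive.
Import Order.TTheory GRing.Theory Num.Theory.
Local Open Scope classical_set_scope.
Local Open Scope ring_scope.

Section MetricMeasure.
Context {R : realType} {X : pointedType}.
Variable d : X -> X -> R.

Definition is_metric : Prop :=
  (forall x y, d x y = 0 <-> x = y) /\
  (forall x y, d x y = d y x) /\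
  (forall x y z, d x z <= d x y + d y z).

Definition cball (x : X) (r : R) : set X := [set y | d x y <= r].
Definition oball (x : X) (r : R) : set X := [set y | d x y < r].

Definition mopen (U : set X) : Prop :=
  forall x, U x -> exists r, 0 < r /\ oball x r `<=` U.
Definition mclosed (F : set X) : Prop := mopen (~` F).

Definition mcomplete : Prop :=
  forall u : nat -> X,
    (forall e, 0 < e -> exists N, forall m n, (N <= m)%N -> (N <= n)%N ->
        d (u m) (u n) < e) ->
    exists l, forall e, 0 < e -> exists N, forall n, (N <= n)%N -> d (u n) l < e.

Definition mseparable : Prop :=
  exists D : set X, countable D /\
    forall x e, 0 < e -> exists y, D y /\ d x y < e.

Definition borel_sets : set (set X) := <<s [set U | mopen U] >>.

Local Open Scope ereal_scope.
Variable mu : {outer_measure set X -> \bar R}.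

Definition borel_regular : Prop :=
  (forall B, borel_sets B -> mu.-caratheodory B) /\
  (forall A, exists B, borel_sets B /\ A `<=` B /\ mu B = mu A).

Definition locally_finite : Prop :=
  forall x, exists r, (0 < r)%R /\ mu (cball x r) < +oo.

Definition msupport : set X :=
  [set x | forall r, (0 < r)%R -> 0 < mu (oball x r)].

Definition doubling_bounded (Cd : R -> R) : Prop :=
  forall R0, (0 < R0)%R -> forall r x, (0 < r <= R0)%R ->
    mu (cball x (2 * r)) <= (Cd R0)%:E * mu (cball x r).

Definition uniformly_locally_doubling : Prop := exists Cd, doubling_bounded Cd.

(** integration against the restriction of mu to Caratheodory-measurable sets *)
Definition mint (A : set X) (g : X -> \bar R) : \bar R :=
  \int[(mu : set (caratheodory_type mu) -> \bar R)]_(y in A) g y.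

Definition mavg (A : set X) (g : X -> \bar R) : \bar R := (mu A)^-1 * mint A g.

Definition lipschitz (f : X -> R) : Prop :=
  exists L : R, forall x y, (`|f x - f y| <= L * d x y)%R.

Definition Lipr (f : X -> R) (x : X) (r : R) : \bar R :=
  ereal_sup [set (`|f y - f x|)%:E | y in cball x r] * (r^-1)%:E.

Definition lip (f : X -> R) (x : X) : \bar R :=
  ereal_sup [set ereal_inf [set Lipr f x r | r in [set r | (0 < r < delta)%R]]
            | delta in [set delta | (0 < delta)%R]].

Definition poincare (p : R) : Prop :=
  forall R0, (0 < R0)%R -> exists C lam : R, (1 <= C)%R /\ (1 <= lam)%R /\
    forall f, lipschitz f -> forall x r, (0 < r <= R0)%R ->
      ereal_inf [set mavg (cball x r) (fun y => (`|f y - c|)%:E) | c in [set: R]]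
      <= (C * r)%:E *
         poweR (mavg (cball x (lam * r)) (fun y => poweR (lip f y) p)) (p^-1).

Definition Hcontent (theta delta : R) (E : set X) : \bar R :=
  ereal_inf [set s | exists (I : set nat) (c : nat -> X) (rd : nat -> R),
    E `<=` \bigcup_(i in I) cball (c i) (rd i) /\
    (forall i, I i -> (0 < rd i < delta)%R) /\
    s = \esum_(i in I) (mu (cball (c i) (rd i)) * ((rd i) `^ (- theta))%:E)].

Definition Hcodim (theta : R) (E : set X) : \bar R :=
  ereal_sup [set Hcontent theta delta E | delta in [set delta | (0 < delta)%R]].

Definition ADR (theta k1 k2 : R) (S : set X) : Prop :=
  mclosed S /\
  forall x r, S x -> (0 < r <= 1)%R ->
    k1%:E * mu (cball x r) * (r `^ (- theta))%:E <= Hcodim theta (cball x r `&` S) /\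
    Hcodim theta (cball x r `&` S) <= k2%:E * mu (cball x r) * (r `^ (- theta))%:E.

End MetricMeasure.

Section Porosity.
Context {R : realType} {X : pointedType}.
Variable d : X -> X -> R.

Definition porous_ball (S : set X) (sigma : R) (x : X) (r : R) : Prop :=
  exists (y : X) (rho : R), sigma * r <= rho /\
    cball d y rho `<=` cball d x r `\` S.

Definition porous (S : set X) (sigma : R) : Prop :=
  forall x r, S x -> 0 < r <= 1 -> porous_ball S sigma x r.
End Porosity.

(* Main.v *)
Require Import Defs.
From HB Require Import structures.
From mathcomp Require Import all_boot all_order all_algebra.
From mathcomp Require Import all_classical all_reals all_analysis.
Import Order.TTheory GRing.Theory Num.Theory.
Local Open Scope classical_set_scope.
Local Open Scope ring_scope.
From mathcomp Require Import ring lra.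

Definition allP {T : Type} (P : T -> Prop) (L : seq T) : Prop :=
  foldr (fun y acc => P y /\ acc) True L.
Definition exP {T : Type} (P : T -> Prop) (L : seq T) : Prop :=
  foldr (fun y acc => P y \/ acc) False L.

Lemma allP_impl {T : Type} (P Q : T -> Prop) L :
  (forall y, P y -> Q y) -> allP P L -> allP Q L.
Proof. by move=> PQ; elim: L => //= y L IH [/PQ ? /IH ?]. Qed.

Lemma exP_impl {T : Type} (P Q : T -> Prop) L :
  (forall y, P y -> Q y) -> exP P L -> exP Q L.
Proof. by move=> PQ; elim: L => //= y L IH [/PQ ?|/IH ?]; [left|right]. Qed.

Lemma notexP {T : Type} (P : T -> Prop) L : ~ exP P L -> allP (fun y => ~ P y) L.
Proof.
elim: L => //= y L IH h; split; first by move=> ?; apply: h; left.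
by apply: IH => ?; apply: h; right.
Qed.

Lemma allP_exP {T : Type} (P Q : T -> Prop) L :
  allP P L -> exP Q L -> exists y, P y /\ Q y.
Proof.
elim: L => //= y L IH [Py AL] [Qy|EL]; first by exists y.
exact: IH.
Qed.

Lemma final_arith (R : realType) (k1 k2 Q rho M P K4 : R) : 0 < k1 -> 0 < Q -> 0 < rho -> 0 <= M -> 0 < P -> 0 < K4 ->
  k1 * (Q * rho) / 2 * M <= k2 * P * rho -> P <= K4 * M -> 2 * K4 * k2 < k1 * Q -> False.
Proof.
move=> k10 Q0 r0 M0 P0 K0 hS hP hQ.
have h1 : k1 * Q * M <= 2 * k2 * P.
  have : (k1 * Q * M) * (rho / 2) <= (2 * k2 * P) * (rho / 2).
    have -> : k1 * Q * M * (rho / 2) = k1 * (Q * rho) / 2 * M by ring.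
    have -> : 2 * k2 * P * (rho / 2) = k2 * P * rho by field.
    exact: hS.
  by rewrite ler_pM2r // divr_gt0.
have h2 : k1 * Q * P <= k1 * Q * (K4 * M) by rewrite ler_pM2l // mulr_gt0.
have h3 : k1 * Q * P <= (2 * K4 * k2) * P.
  apply: le_trans h2 _; have -> : k1 * Q * (K4 * M) = K4 * (k1 * Q * M) by ring.
  have -> : 2 * K4 * k2 * P = K4 * (2 * k2 * P) by ring.
  by rewrite ler_pM2l.
move: h3; rewrite ler_pM2r //; lra.
Qed.

Section Prop19.
Context {R : realType} {X : pointedType} (d : X -> X -> R)
  (mu : {outer_measure set X -> \bar R}) (Cd : R -> R).
Hypothesis hm : is_metric d.
Hypothesis hdb : doubling_bounded d mu Cd.
Hypothesis hlf : locally_finite d mu.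
Hypothesis hsupp : msupport d mu = setT.

Lemma d_sym x y : d x y = d y x. Proof. by case: hm => _ [+ _]. Qed.
Lemma d_tri x y z : d x z <= d x y + d y z. Proof. by case: hm => _ [_ +]. Qed.
Lemma d_refl x : d x x = 0. Proof. by case: hm => [h _]; apply/h. Qed.
Lemma d_ge0 x y : 0 <= d x y.
Proof. have := d_tri x y x; rewrite d_refl (d_sym y x); lra. Qed.

Lemma cball_sub x a b : a <= b -> cball d x a `<=` cball d x b.
Proof. by move=> ab z /= h; apply: le_trans ab. Qed.

Definition K := Num.max (Cd 1) 1.
Lemma K_ge1 : 1 <= K. Proof. by rewrite /K le_max lexx orbT. Qed.
Lemma K_gt0 : 0 < K. Proof. exact: lt_le_trans ltr01 K_ge1. Qed.

Lemma dbl x r : 0 < r <= 1 ->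
  (mu (cball d x (2 * r)) <= K%:E * mu (cball d x r))%E.
Proof.
move=> hr; have {}hr : 0 < r <= 1 by [].
have := hdb 1 ltr01 r x hr.
move/le_trans; apply.
by apply: lee_wpmul2r; [exact: outer_measure_ge0| rewrite lee_fin /K le_max lexx].
Qed.

Lemma dbl_iter n x r : 0 < r -> r * 2 ^+ n <= 2 ->
  (mu (cball d x (r * 2 ^+ n)) <= (K ^+ n)%:E * mu (cball d x r))%E.
Proof.
move=> r0; elim: n => [|n IH] h.
  by rewrite !expr0 mulr1 mul1e.
have e : r * 2 ^+ n.+1 = 2 * (r * 2 ^+ n) by rewrite exprS; ring.
have p : 0 < r * 2 ^+ n by rewrite mulr_gt0 // exprn_gt0.
have h1 : r * 2 ^+ n <= 1 by move: h; rewrite e; lra.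
rewrite e; apply: le_trans (dbl x (r * 2 ^+ n) _) _; first by rewrite p h1.
rewrite exprS EFinM -muleA; apply: lee_wpmul2l; first by rewrite lee_fin ltW // K_gt0.
apply: IH; lra.
Qed.

Lemma mu_pos x r : 0 < r -> (0 < mu (cball d x r))%E.
Proof.
move=> r0; have : msupport d mu x by rewrite hsupp.
move=> /(_ r r0) h; apply: lt_le_trans h _; apply: le_outer_measure.
by move=> z /= /ltW.
Qed.

Lemma mu_fin x r : 0 < r <= 2 -> (mu (cball d x r) < +oo)%E.
Proof.
case/andP=> r0 r2; have [r1 [r10 hr1]] := hlf x.
have [n hn] : exists n : nat, r <= r1 * 2 ^+ n.
  have q : 0 <= r / r1 by rewrite divr_ge0 // ltW.
  exists (Num.Def.archi_bound (r / r1)).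
  have := archi_boundP q; set N := Num.Def.archi_bound _ => hN.
  have : (N%:R : R) <= 2 ^+ N.
    by rewrite -natrX ler_nat; apply: ltnW; apply: ltn_expl.
  move=> hN2; rewrite -ler_pdivrMl // mulrC; exact: le_trans (ltW hN) hN2.
set r' := r / 2 ^+ n.
have r'0 : 0 < r' by rewrite divr_gt0 // exprn_gt0.
have er : r = r' * 2 ^+ n by rewrite /r' divfK // expf_neq0.
have h2 : r' * 2 ^+ n <= 2 by rewrite -er.
have := dbl_iter n x r' r'0 h2; rewrite -er => h.
apply: le_lt_trans h _; rewrite lte_mul_pinfty //.
  by rewrite lee_fin exprn_ge0 // ltW // K_gt0.
apply: le_lt_trans hr1; apply: le_outer_measure; apply: cball_sub.
by rewrite /r' ler_pdivrMr ?exprn_gt0 // mulrC.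
Qed.


Section Hc.
Variable theta : R.
Local Notation Hc := (Hcontent d mu theta).
Local Notation Hd := (Hcodim d mu theta).

Lemma Hc_mono_delta (d1 d2 : R) E : d1 <= d2 -> (Hc d2 E <= Hc d1 E)%E.
Proof.
move=> le12; apply: ereal_inf_le_tmp => _ [I [c [rd [cov [hrd ->]]]]].
exists I, c, rd; split => //; split => // i Ii; have /andP[h1 h2] := hrd i Ii.
by rewrite h1 /=; apply: lt_le_trans le12.
Qed.

Lemma Hc_mono_set (dl : R) E F : E `<=` F -> (Hc dl E <= Hc dl F)%E.
Proof.
move=> EF; apply: ereal_inf_le_tmp => _ [I [c [rd [cov [hrd ->]]]]].
by exists I, c, rd; split => //; apply: subset_trans cov.
Qed.

Lemma Hc_le_Hd (dl : R) E : 0 < dl -> (Hc dl E <= Hd E)%E.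
Proof. by move=> dl0; apply: ereal_sup_ubound; exists dl. Qed.

Lemma Hd_mono_set E F : E `<=` F -> (Hd E <= Hd F)%E.
Proof.
move=> EF; apply/ereal_supP => _ [dl dl0 <-].
exact: le_trans (Hc_mono_set dl E F EF) (Hc_le_Hd dl F dl0).
Qed.

Lemma Hc_sep (dl : R) A B : 0 < dl ->
  (forall a b, A a -> B b -> 2 * dl <= d a b) ->
  (Hc dl A + Hc dl B <= Hc dl (A `|` B))%E.
Proof.
move=> dl0 sep; apply/ereal_infP => _ [I [c [rd [cov [hrd ->]]]]].
set J := [set i | exists2 a, A a & d (c i) a <= rd i].
rewrite (esumID J); last first.
  move=> i Ii; apply: mule_ge0; first exact: outer_measure_ge0.
  by rewrite lee_fin powR_ge0.
apply: leeD.
- apply: ereal_inf_lbound; exists (I `&` J), c, rd; split; [|split; [|by []]].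
  + move=> a Aa; have [i Ii hi] := cov a (or_introl Aa).
    by exists i => //; split => //; exists a.
  + by move=> i [Ii _]; exact: hrd.
- apply: ereal_inf_lbound; exists (I `&` ~` J), c, rd; split; [|split; [|by []]].
  + move=> b Bb; have [i Ii hi] := cov b (or_intror Bb).
    exists i => //; split => //.
    move=> [a Aa ha]; have := sep a b Aa Bb; have := d_tri a (c i) b.
    rewrite (d_sym a (c i)); have /andP[h1 h2] := hrd i Ii.
    move: hi; rewrite /cball /= => hi; lra.
  + by move=> i [Ii _]; exact: hrd.
Qed.


Lemma powN_anti (a b : R) : 0 <= theta -> 0 < a -> a <= b ->
  b `^ (- theta) <= a `^ (- theta).
Proof.
move=> t0 a0 ab; rewrite !powRN lef_pV2 ?posrE ?powR_gt0 //; last exact: lt_le_trans ab.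
by apply: ge0_ler_powR => //; rewrite nnegrE ltW //; apply: lt_le_trans ab.
Qed.

Lemma Hlow (dl : R) E : 0 <= theta -> 0 < dl ->
  ((dl `^ (- theta))%:E * mu E <= Hc dl E)%E.
Proof.
move=> t0 dl0; apply/ereal_infP => _ [I [c [rd [cov [hrd ->]]]]].
pose F i := if i \in I then cball d (c i) (rd i) else set0.
have h1 : (mu E <= \sum_(0 <= i <oo | i \in I) mu (cball d (c i) (rd i)))%E.
  rewrite eseries_mkcond.
  rewrite (@eq_eseriesr _ _ (fun i => mu (F i))); last first.
    by move=> i _; rewrite /F; case: ifP => //; rewrite outer_measure0.
  apply: le_trans (outer_measure_sigma_subadditive mu F).
  apply: le_outer_measure => z /cov [i Ii hi]; exists i => //.
  by rewrite /F mem_set.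
apply: le_trans (lee_wpmul2l _ h1) _; first by rewrite lee_fin powR_ge0.
rewrite -nneseriesZl; last by move=> i _; exact: outer_measure_ge0.
rewrite nneseries_esum; last first.
  by move=> i _; apply: mule_ge0; [rewrite lee_fin powR_ge0|exact: outer_measure_ge0].
rewrite set_mem_set; apply: le_esum => i Ii; rewrite muleC.
apply: lee_wpmul2l; first exact: outer_measure_ge0.
have /andP[h2 h3] := hrd i Ii.
by rewrite lee_fin; apply: powN_anti => //; apply: ltW.
Qed.

Lemma null_of_Hd E h : 0 < theta -> (Hd E <= h%:E)%E -> mu E = 0%E.
Proof.
move=> t0 hE.
have key : forall dl, 0 < dl -> ((dl `^ (- theta))%:E * mu E <= h%:E)%E.
  move=> dl dl0; apply: le_trans (Hlow dl E (ltW t0) dl0) _.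
  exact: le_trans (Hc_le_Hd dl E dl0) hE.
have mu0 := outer_measure_ge0 mu E.
case: (mu E) key mu0 => [e| |] key mu0 //.
- move: mu0; rewrite lee_fin le_eqVlt => /orP[/eqP <- //|e0].
  have h0 : 0 < h.
    have := key 1 ltr01; rewrite powR1 /= -EFinM lee_fin mul1r => he.
    exact: lt_le_trans e0 he.
  pose q := e / (2 * h).
  have q0 : 0 < q by rewrite /q divr_gt0 // mulr_gt0.
  have := key (q `^ theta^-1) (powR_gt0 _ q0).
  rewrite -powRrM mulrN mulVf ?gt_eqF //. rewrite (powR_inv1 (ltW q0)) -EFinM lee_fin /q invf_div.
  rewrite divfK ?gt_eqF // => hh; exfalso; lra.
- have := key 1 ltr01; rewrite powR1 /= mul1e leye_eq => /eqP.
  done.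
Qed.

End Hc.

Lemma fin_ball x r : 0 < r <= 2 -> mu (cball d x r) = (fine (mu (cball d x r)))%:E.
Proof.
move=> hr; rewrite fineK // ge0_fin_numE ?mu_fin //; exact: outer_measure_ge0.
Qed.

Lemma muS0 theta k1 k2 S : 0 < theta -> mseparable d ->
  ADR d mu theta k1 k2 S -> mu S = 0%E.
Proof.
move=> t0 [D [cD dD]] [_ hadr].
have hloc : forall s, S s -> mu (cball d s 1 `&` S) = 0%E.
  move=> s Ss; have r1 : 0 < (1:R) <= 1 by rewrite ltr01 lexx.
  have [_ up] := hadr s 1 Ss r1.
  apply: (@null_of_Hd theta _ (k2 * fine (mu (cball d s 1)) * 1 `^ (- theta))).
  by [].
  by rewrite !EFinM -fin_ball //; rewrite ltr01 /= ler1n.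
have [f finj] := countable_injP _ cD.
pose F n := S `&` [set z | exists y, D y /\ f y = n /\ d y z <= 2^-1].
have F0 : forall n, mu (F n) = 0%E.
  move=> n; have [[z Fz]|] := pselect (exists z, F n z).
  move: (Fz) => [Sz [y0 [Dy0 [fy0 dy0]]]].
  apply/eqP; rewrite eq_le outer_measure_ge0 andbT -(hloc z Sz).
  apply: le_outer_measure => w [Sw [y [Dy [fy dy]]]]; split => //.
  have yy : y = y0 by apply: finj; rewrite ?inE //; rewrite fy fy0.
  rewrite /cball /=; have := d_tri z y0 w; rewrite (d_sym z y0); subst y; lra.
  move=> nz; rewrite (_ : F n = set0) ?outer_measure0 //.
  by apply/seteqP; split => // z Fz; apply: nz; exists z.
apply/eqP; rewrite eq_le outer_measure_ge0 andbT.
have -> : (0 = \sum_(0 <= i <oo) mu (F i))%E by rewrite eseries0.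
apply: le_trans (outer_measure_sigma_subadditive mu F).
apply: le_outer_measure => s Ss.
have h2 : (0:R) < 2^-1 by rewrite invr_gt0.
have [y [Dy dsy]] := dD s _ h2.
exists (f y) => //; split => //; exists y; split => //; split => //.
by rewrite d_sym ltW.
Qed.

Section Porous.
Variables (theta k1 k2 : R) (S : set X).
Hypothesis t0 : 0 < theta.
Hypothesis k10 : 0 < k1.
Hypothesis hadr : ADR d mu theta k1 k2 S.
Local Notation Hc := (Hcontent d mu theta).
Local Notation Hd := (Hcodim d mu theta).
Local Notation m y rho := (fine (mu (cball d y rho))).

Lemma m_pos y rho : 0 < rho <= 2 -> 0 < m y rho.
Proof.
move=> h; case/andP: (h) => h1 h2; have := mu_pos y rho h1; rewrite fin_ball // lte_fin.
Qed.

Lemma Hc_ge0 dl E : (0 <= Hc dl E)%E.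
Proof.
apply/ereal_infP => _ [I [c [rd [cov [hrd ->]]]]]; apply: esum_ge0 => i _.
by apply: mule_ge0; [exact: outer_measure_ge0| rewrite lee_fin powR_ge0].
Qed.

Definition Ab t y := cball d y t `&` S.
Definition Ub t L := foldr (fun y acc => Ab t y `|` acc) set0 L.

Lemma Ub_ex t L z : Ub t L z -> exP (fun y => Ab t y z) L.
Proof. by elim: L => //= y L IH [h|/IH h]; [left|right]. Qed.

Fixpoint goodL (x : X) (rad t : R) (L : seq X) : Prop :=
  match L with
  | [::] => True
  | y :: L' => S y /\ d x y <= rad /\ allP (fun y' => 4 * t < d y y') L' /\ goodL x rad t L'
  end.

Lemma goodL_all x rad t L : goodL x rad t L -> allP (fun y => S y /\ d x y <= rad) L.
Proof. by elim: L => //= y L IH [Sy [dy [_ /IH h]]]. Qed.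

Lemma sep_sum x rad t dl (v : X -> R) L : 0 < dl -> dl <= t ->
  goodL x rad t L -> allP (fun y => ((v y)%:E <= Hc dl (Ab t y))%E) L ->
  ((\sum_(y <- L) v y)%:E <= Hc dl (Ub t L))%E.
Proof.
move=> dl0 dlt; elim: L => [|y L IH] /=; first by rewrite big_nil Hc_ge0.
move=> [Sy [dy [sepy gL]]] [vy AL]; rewrite big_cons EFinD.
apply: le_trans (leeD vy (IH gL AL)) _; apply: Hc_sep => // a b [ya _] /Ub_ex Eb.
have [y' [sy' [yb _]]] := allP_exP _ _ _ sepy Eb.
move: ya yb; rewrite /cball /= => ya yb.
have := d_tri y a y'; have := d_tri a b y'; rewrite (d_sym b y'); lra.
Qed.

Lemma Sep_main x r t L : S x -> 0 < r <= 1 -> 0 < t -> 4 * t <= r ->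
  goodL x (r / 2 + t) t L ->
  \sum_(y <- L) (k1 * m y t * t `^ (- theta) / 2) <= k2 * m x r * r `^ (- theta).
Proof.
move=> Sx hr tp t4 gL; case: hadr => _ hA.
have t1 : 0 < t <= 1 by apply/andP; split => //; case/andP: hr => ? ?; lra.
have t2 : 0 < t <= 2 by apply/andP; split => //; case/andP: hr => ? ?; lra.
have r2 : 0 < r <= 2 by case/andP: hr => ? ?; apply/andP; split => //; lra.
have [dl [dl0 [dlt hall]]] : exists dl, 0 < dl /\ dl <= t /\
    allP (fun y => ((k1 * m y t * t `^ (- theta) / 2)%:E <= Hc dl (Ab t y))%E) L.
  move: (goodL_all _ _ _ _ gL); elim: L {gL} => [_|y L IH] /=.
    by exists t; split => //; split.
  move=> [[Sy _] /IH [dl [dl0 [dlt hall]]]].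
  have [lo _] := hA y t Sy t1.
  rewrite fin_ball // -!EFinM in lo.
  set v := k1 * m y t * t `^ (- theta) in lo *.
  have v0 : 0 < v by rewrite /v mulr_gt0 ?powR_gt0 // mulr_gt0 // m_pos.
  have : ((v / 2)%:E < Hd (Ab t y))%E.
    by apply: lt_le_trans lo; rewrite lte_fin; lra.
  case/ereal_sup_gt => _ [dl' dl'0 <-] hlt.
  exists (Num.min dl dl'); split; first by rewrite lt_min dl0.
  split; first by rewrite ge_min dlt.
  split.
    apply: le_trans (ltW hlt) _; apply: Hc_mono_delta; by rewrite ge_min lexx orbT.
  apply: allP_impl hall => z hz; apply: le_trans hz _; apply: Hc_mono_delta.
  by rewrite ge_min lexx.
have := sep_sum _ _ _ _ _ _ dl0 dlt gL hall.
move=> h1; rewrite -lee_fin; apply: le_trans h1 _.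
have sub : Ub t L `<=` cball d x r `&` S.
  move=> z /Ub_ex Ez; have [y [[_ dxy] [yz Sz]]] := allP_exP _ _ _ (goodL_all _ _ _ _ gL) Ez.
  split => //; move: yz; rewrite /cball /= => yz.
  have := d_tri x y z; lra.
apply: le_trans (Hc_mono_set theta dl _ _ sub) _.
apply: le_trans (Hc_le_Hd theta dl _ dl0) _.
have [_ up] := hA x r Sx hr; rewrite fin_ball // -!EFinM in up; exact: up.
Qed.

Definition U8 t L := foldr (fun y acc => cball d y (8 * t) `|` acc) set0 L.

Lemma exP_U8 t L z : exP (fun y => d y z <= 8 * t) L -> U8 t L z.
Proof. by elim: L => //= y L IH [h|/IH h]; [left|right]. Qed.

Lemma mu_U8 t L : (mu (U8 t L) <= \sum_(y <- L) mu (cball d y (8 * t)))%E.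
Proof.
elim: L => [|y L IH] /=; first by rewrite big_nil outer_measure0.
rewrite big_cons; apply: le_trans (outer_measureU2 _ _ _) _.
exact: leeD2l.
Qed.

Lemma size_sum (c : R) (w : X -> R) L : allP (fun y => c <= w y) L ->
  (size L)%:R * c <= \sum_(y <- L) w y.
Proof.
elim: L => [|y L IH] /=; first by rewrite big_nil mul0r.
move=> [cy /IH h]; rewrite big_cons -addn1 natrD mulrDl mul1r addrC.
exact: lerD.
Qed.

Lemma porous_main x r (mm : nat) : (2 <= mm)%N ->
  2 * K ^+ 4 * k2 < k1 * (2 ^+ mm) `^ theta -> S x -> 0 < r <= 1 ->
  porous_ball d S ((2 ^+ mm)^-1) x r.
Proof.
move=> mm2 hQ Sx hr.
set sg := ((2:R) ^+ mm)^-1.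
have p2 : (4:R) <= 2 ^+ mm.
  have -> : (4:R) = 2 ^+ 2 by rewrite expr2; lra.
  by apply: ler_weXn2l => //; lra.
have sg0 : 0 < sg by rewrite /sg invr_gt0 exprn_gt0.
have sg4 : sg <= 4^-1 by rewrite /sg lef_pV2 ?posrE ?exprn_gt0 //; lra.
case/andP: (hr) => r0 r1.
set t := sg * r.
have tp : 0 < t by rewrite /t mulr_gt0.
have t4 : 4 * t <= r.
  rewrite /t; have : sg * r <= 4^-1 * r by rewrite ler_pM2r.
  lra.
apply: contrapT => NP.
have NPz : forall z, d x z <= r / 2 -> exists s, S s /\ d z s <= t.
  move=> z hz; apply: contrapT => hn; apply: NP; exists z, t; split; first by [].
  move=> w; rewrite /cball /= => hw; split.
    have := d_tri x z w; lra.
  by move=> Sw; apply: hn; exists w.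
have r2 : 0 < r <= 2 by apply/andP; split => //; lra.
have t2 : 0 < t <= 2 by apply/andP; split => //; lra.
have et : t * 2 ^+ mm.+1 = 2 * r.
  rewrite /t /sg exprS; field; rewrite expf_neq0 //; lra.
have lower : forall y, d x y <= r -> m x r <= K ^+ mm.+1 * m y t.
  move=> y dxy; rewrite -lee_fin EFinM -!fin_ball //.
  apply: le_trans (dbl_iter mm.+1 y t tp _); last by rewrite et; lra.
  apply: le_outer_measure => z; rewrite /cball /= et => hz.
  have := d_tri y x z; rewrite (d_sym y x) => h; apply: (le_trans h); apply: le_trans (lerD dxy hz) _; lra.
have K0 : 0 < K ^+ mm.+1 by rewrite exprn_gt0 // K_gt0.
have Px : 0 < m x r by apply: m_pos.
set c := k1 * (m x r / K ^+ mm.+1) * t `^ (- theta) / 2.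
have c0 : 0 < c by rewrite /c !mulr_gt0 ?divr_gt0 ?powR_gt0 ?invr_gt0.
have bound : forall L, goodL x (r / 2 + t) t L ->
    (size L)%:R * c <= k2 * m x r * r `^ (- theta).
  move=> L gL; apply: le_trans (Sep_main _ _ _ _ Sx hr tp t4 gL).
  apply: size_sum; apply: allP_impl (goodL_all _ _ _ _ gL) => y [_ dxy].
  rewrite /c ler_pM2r ?invr_gt0 // ler_pM2r ?powR_gt0 // ler_pM2l //.
  rewrite ler_pdivrMr // mulrC; apply: lower; lra.
have [L [gL cov]] : exists L, goodL x (r / 2 + t) t L /\
    forall s, S s -> d x s <= r / 2 + t -> exP (fun y => d y s <= 4 * t) L.
  apply: contrapT => hno.
  have grow : forall n : nat, exists L, goodL x (r / 2 + t) t L /\ size L = n.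
    elim => [|n [L [gL sL]]]; first by exists [::].
    apply: contrapT => hn'; apply: hno; exists L; split => // s Ss hs.
    apply: contrapT => hne; apply: hn'; exists (s :: L); split; last by rewrite /= sL.
    split => //; split => //; split => //.
    apply: allP_impl (notexP _ _ hne) => y hy; rewrite d_sym ltNge; exact/negP.
  set B := k2 * m x r * r `^ (- theta) / c.
  have B0 : 0 <= B.
    rewrite /B; apply: divr_ge0; last exact: ltW c0.
    have := bound [::] I; rewrite /= mul0r; exact.
  have [L [gL sL]] := grow (Num.Def.archi_bound B).
  have := bound L gL; rewrite sL -ler_pdivlMr // -/B.
  have := archi_boundP B0; lra.
have sub : cball d x (r / 2) `<=` U8 t L.
  move=> z hz; have [s [Ss dzs]] := NPz z hz.
  have hs : d x s <= r / 2 + t.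
    apply: le_trans (d_tri x z s) _; exact: lerD.
  apply: exP_U8; apply: exP_impl (cov s Ss hs) => y hy.
  apply: le_trans (d_tri y s z) _; rewrite (d_sym s z).
  apply: le_trans (lerD hy dzs) _; lra.
have e8 : (2:R) ^+ 3 = 8 by rewrite !exprS expr0; lra.
have t8 : t * 2 ^+ 3 <= 2 by rewrite e8; lra.
have h1 : (mu (cball d x (r / 2)) <= \sum_(y <- L) (K ^+ 3 * m y t)%:E)%E.
  apply: le_trans (le_outer_measure mu _ _ sub) _; apply: le_trans (mu_U8 t L) _.
  apply: lee_sum => y _; rewrite EFinM -fin_ball //.
  have -> : 8 * t = t * 2 ^+ 3 by rewrite e8; lra.
  exact: dbl_iter.
have r22 : 0 < r / 2 by lra.
have h2 : (mu (cball d x r) <= K%:E * mu (cball d x (r / 2)))%E.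
  have := dbl_iter 1 x (r / 2) r22; rewrite expr1 divfK ?pnatr_eq0 //; apply; lra.
have hP : m x r <= K ^+ 4 * \sum_(y <- L) m y t.
  rewrite -lee_fin -fin_ball //; apply: le_trans h2 _.
  rewrite sumEFin in h1; rewrite exprS -mulrA mulr_sumr EFinM.
  by apply: lee_wpmul2l => //; rewrite lee_fin; apply: ltW; exact: K_gt0.
have hS := Sep_main _ _ _ _ Sx hr tp t4 gL.
have eS : \sum_(y <- L) (k1 * m y t * t `^ (- theta) / 2) =
    k1 * t `^ (- theta) / 2 * \sum_(y <- L) m y t.
  by rewrite mulr_sumr; apply: eq_bigr => y _; ring.
set Q := ((2:R) ^+ mm) `^ theta.
have Q0 : 0 < Q by rewrite /Q powR_gt0 // exprn_gt0.
have eQ : sg `^ (- theta) = Q.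
  rewrite powRN; have h : sg `^ theta * Q = 1.
    by rewrite /Q -powRM ?ltW ?exprn_gt0 // /sg mulVf ?expf_neq0 // powR1.
  have ha : sg `^ theta != 0 by rewrite gt_eqF // powR_gt0.
  by apply: (mulfI ha); rewrite mulfV // h.
have eT : t `^ (- theta) = Q * r `^ (- theta) by rewrite /t powRM ?ltW // eQ.
rewrite eS eT in hS.
apply: (@final_arith R k1 k2 Q (r `^ (- theta)) (\sum_(y <- L) m y t) (m x r) (K ^+ 4)) => //.
- by rewrite powR_gt0.
- by apply: sumr_ge0 => y _; apply: fine_ge0; exact: outer_measure_ge0.
- by rewrite exprn_gt0 // K_gt0.
Qed.

End Porous.

End Prop19.

Lemma choose_m (R : realType) (A th k1 : R) : 0 < th -> 0 < k1 ->
  exists mm : nat, (2 <= mm)%N /\ A < k1 * ((2:R) ^+ mm) `^ th.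
Proof.
move=> t0 k10.
set M0 := Num.max (A / k1) 1.
have M00 : 0 < M0 by rewrite /M0 lt_max ltr01 orbT.
set M := M0 `^ th^-1.
have M0' : 0 <= M by rewrite /M powR_ge0.
set N := Num.Def.archi_bound M.
have hN := archi_boundP M0'.
exists N.+2; split => //.
have h2 : M < (2:R) ^+ N.+2.
  apply: lt_le_trans hN _.
  rewrite -natrX ler_nat; apply: ltnW; apply: leq_trans (ltn_expl N (isT : 1 < 2)%N) _.
  by apply: leq_pexp2l => //; rewrite leqW.
have h3 : M `^ th < ((2:R) ^+ N.+2) `^ th.
  by apply: gt0_ltr_powR => //; rewrite nnegrE // ltW // exprn_gt0.
have eM : M `^ th = M0 by rewrite /M -powRrM mulVf ?gt_eqF // powRr1 // ltW.
rewrite eM in h3; rewrite -ltr_pdivrMl //; apply: le_lt_trans h3.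
by rewrite mulrC le_max lexx.
Qed.

Theorem proposition1p9 (R : realType) (theta k1 k2 : R) (Cd : R -> R) :
  0 < theta -> 0 < k1 ->
  exists sigma : R, 0 < sigma <= 1 /\
  forall (X : pointedType) (d : X -> X -> R)
         (mu : {outer_measure set X -> \bar R}) (p : R) (S : set X),
    is_metric d -> mcomplete d -> mseparable d ->
    borel_regular d mu -> locally_finite d mu -> msupport d mu = setT ->
    doubling_bounded d mu Cd ->
    1 < p -> poincare d mu p ->
    ADR d mu theta k1 k2 S ->
    mu S = 0%E /\ porous d S sigma.
Proof.
move=> t0 k10.
have [mm [mm2 hmm]] := @choose_m R (2 * K Cd ^+ 4 * k2) _ _ t0 k10.
exists ((2:R) ^+ mm)^-1; split.
  apply/andP; split; first by rewrite invr_gt0 exprn_gt0.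
  by rewrite invf_le1 ?exprn_gt0 //; apply: exprn_ege1; rewrite ler1n.
move=> X d mu p S hm _ hs _ hlf hsupp hdb _ _ hadr; split.
  exact: (@muS0 R X d mu Cd hm hdb hlf theta k1 k2 S t0 hs hadr).
move=> x r Sx hr.
exact: (@porous_main R X d mu Cd hm hdb hlf hsupp theta k1 k2 S k10 hadr x r mm mm2 hmm Sx hr).
Qed.
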